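(* Let $S$ be as in the context, $1\le k<n$, and let $\zeta\in\mathcal{T}_k(S)$ be a node that has exactly one child $\phi$. (1) If $\zeta$ has a unique Weiner link, then $w_{k+1}(\phi)=1$. (2) If $\zeta$ has multiple Weiner links, then $w_{k+1}(\phi)=w_k(\zeta)$.
   Context: $\Sigma$ is a finite totally ordered alphabet containing a symbol $\$$ smaller than every other symbol. $S$ is a string of length $n\ge 2$ over $\Sigma$ whose last character is $\$$ and in which $\$$ occurs nowhere else. The rotations of $S$ are the $n$ strings $S[i..n]S[1..i-1]$, $i\in[1,n]$. The rotation-trie $\mathcal{T}(S)$ is the trie of the set of rotations of $S$ (a rooted tree with single-character edge labels, children of a node having distinct labels, ordered by increasing label). The label $l(\phi)$ of a node is the concatenation of edge labels on the root-to-$\phi$ path, its level is $|l(\phi)|$, leaves are the nodes at level $n$, $|\phi|$ is the number of leaves in the subtree rooted at $\phi$, and $\mathcal{T}_k(S)$ is the set of nodes at level $k$. Siblings are distinct nodes with the same parent. A triple $(\phi,\varphi,c)$ is a Weiner link of $\phi$ if $l(\varphi)=c\,l(\phi)$, or $|l(\phi)|=n$ and $l(\varphi)=c\,l(\phi)[1..n-1]$. $\phi$ has a unique Weiner link if all its Weiner links have the same target node, and multiple Weiner links otherwise. For $\phi\in\mathcal{T}_k(S)$ define $w_k(\phi)=1$ if $\phi$ has a unique Weiner link $(\phi,\varphi,c)$ and $\varphi$ has no siblings, and $w_k(\phi)=|\phi|$ otherwise. *)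

(* Defs.v *)
From HB Require Import structures.
From mathcomp Require Import all_boot all_order.
From Stdlib Require Import ClassicalEpsilon.
Set Implicit Arguments. Unset Strict Implicit. Unset Printing Implicit Defensive.
Import Order.TTheory.
Local Open Scope order_scope.

Section RotTrie.
Variables (d : Order.disp_t) (T : finOrderType d).

Definition valid_string (dollar : T) (S : seq T) : Prop :=
  [/\ (2 <= size S)%N, last dollar S = dollar, count_mem dollar S = 1%N
    & forall c : T, c != dollar -> dollar < c].

(* The n rotations S[i..n]S[1..i-1], i in [1,n]  (= rot (i-1) S). *)
Definition rotations (S : seq T) : seq (seq T) :=
  [seq rot i S | i <- iota 0 (size S)].

(* Nodes of the rotation trie are identified with their labels:
   the prefixes of rotations.  The level of a node u is size u. *)
Definition is_node (S : seq T) (u : seq T) : bool :=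
  has (prefix u) (rotations S).

(* |u| : number of leaves (distinct rotations) in the subtree of u. *)
Definition nleaves (S : seq T) (u : seq T) : nat :=
  count (prefix u) (undup (rotations S)).

Definition is_child (S : seq T) (u v : seq T) : bool :=
  [&& is_node S u, is_node S v, size v == (size u).+1 & prefix u v].

Definition has_sibling (S : seq T) (v : seq T) : Prop :=
  exists v', [/\ is_node S v', v' != v, (0 < size v)%N, size v' = size v
               & take (size v).-1 v' = take (size v).-1 v].

Definition weiner_link (S : seq T) (u v : seq T) (c : T) : bool :=
  is_node S u && is_node S v &&
  ((v == c :: u) || ((size u == size S) && (v == c :: take (size S).-1 u))).

Definition unique_wl (S : seq T) (u : seq T) : Prop :=
  forall v1 c1 v2 c2, weiner_link S u v1 c1 -> weiner_link S u v2 c2 -> v1 = v2.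

Definition w_one_cond (S : seq T) (u : seq T) : Prop :=
  unique_wl S u /\ exists v c, weiner_link S u v c /\ ~ has_sibling S v.

(* w_k(u) for a node u at level k (k is size u) *)
Definition w (S : seq T) (u : seq T) : nat :=
  if excluded_middle_informative (w_one_cond S u) then 1%N else nleaves S u.

End RotTrie.

(* Main.v *)
Require Import Defs.
From HB Require Import structures.
From mathcomp Require Import all_boot all_order.
From Stdlib Require Import Classical ClassicalEpsilon.
From mathcomp Require Import zify.
Import Order.TTheory.
Set Implicit Arguments. Unset Strict Implicit.

Section Helpers.
Variables (d : Order.disp_t) (T : finOrderType d) (S : seq T).
Hypothesis S0 : (0 < size S)%N.

Lemma inR_size r : r \in rotations S -> size r = size S.
Proof. by move=> /mapP[i _ ->]; rewrite size_rot. Qed.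

Lemma inR_perm r : r \in rotations S -> perm_eq r S.
Proof. by move=> /mapP[i _ ->]; rewrite perm_rot. Qed.

Lemma inR_rot1 r : r \in rotations S -> rot 1 r \in rotations S.
Proof.
move=> /mapP[i]; rewrite mem_iota add0n => /andP[_ ltiS] ->.
apply/mapP; case: (ltnP i.+1 (size S)) => h.
  by exists i.+1; [rewrite mem_iota | rewrite -rotD ?add1n].
exists 0%N; first by rewrite mem_iota.
by rewrite -rotD ?add1n // rot_oversize // rot0.
Qed.

Lemma inR_rot m r : r \in rotations S -> rot m r \in rotations S.
Proof.
move=> Hr; elim: m => [|m IH]; first by rewrite rot0.
case: (ltnP m (size r)) => h.
  by rewrite -add1n rotD //; apply: inR_rot1.
by rewrite rot_oversize // leqW.
Qed.

Lemma nodeP u : reflect (exists2 r, r \in rotations S & prefix u r) (is_node S u).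
Proof. exact: hasP. Qed.

Lemma node_size u : is_node S u -> (size u <= size S)%N.
Proof. by move=> /nodeP[r Hr Hp]; rewrite -(inR_size Hr); apply: size_prefix. Qed.

Lemma node_prefix u v : is_node S v -> prefix u v -> is_node S u.
Proof. by move=> /nodeP[r Hr Hp] Huv; apply/nodeP; exists r => //; apply: prefix_trans Hp. Qed.

Lemma node_full u : is_node S u -> size u = size S -> u \in rotations S.
Proof.
move=> /nodeP[r Hr]; rewrite prefixE => /eqP Ht Hs.
by rewrite -Ht Hs -(inR_size Hr) take_size.
Qed.

Lemma node_ext u : is_node S u -> (size u < size S)%N -> exists x, is_node S (rcons u x).
Proof.
move=> /nodeP[r Hr /prefixP[s Hs]] Hlt.
have := inR_size Hr; rewrite Hs size_cat.
case: s Hs => [|x t] Hs; first by rewrite addn0 => E; rewrite E ltnn in Hlt.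
move=> _; exists x; apply/nodeP; exists r => //.
by rewrite Hs -cats1 prefix_catr // eqxx /= eqxx prefix0s.
Qed.

Lemma node_behead c u : is_node S (c :: u) -> is_node S u.
Proof.
move=> /nodeP[[|y r'] Hr] //= /andP[_ Hp].
apply/nodeP; exists (rcons r' y); first by rewrite -rot1_cons inR_rot1.
by apply: prefix_trans Hp (prefix_rcons _ _).
Qed.

Lemma node_prepend u : is_node S u -> (size u < size S)%N -> exists c, is_node S (c :: u).
Proof.
move=> /nodeP[r Hr Hp] Hlt; have Hsz := inR_size Hr.
move: Hr Hp Hsz; case/lastP: r => [|r1 z] Hr Hp Hsz.
  by move: S0; rewrite -Hsz.
exists z; apply/nodeP; exists (z :: r1).
  by rewrite -rotr1_rcons /rotr inR_rot.
rewrite /= eqxx /=; move: Hp; rewrite !prefixE -cats1 takel_cat //.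
by rewrite size_rcons in Hsz; rewrite -ltnS Hsz.
Qed.

Lemma wl_form u v c : weiner_link S u v c ->
  v = c :: (if size u == size S then take (size S).-1 u else u).
Proof.
case/andP=> /andP[Hu Hv] /orP[/eqP E|/andP[/eqP E1 /eqP E2]].
  case: ifP => // /eqP E'.
  have := node_size Hv; by rewrite E /= E' ltnn.
by rewrite E1 eqxx.
Qed.

End Helpers.

Lemma take_rcons_size (A : eqType) (p : seq A) x : take (size p) (rcons p x) = p.
Proof. by rewrite -cats1 take_size_cat. Qed.

Theorem mainTheorem5 (d : Order.disp_t) (T : finOrderType d) (dollar : T)
  (S : seq T) (k : nat) (zeta phi : seq T) :
  valid_string dollar S ->
  (1 <= k < size S)%N ->
  is_node S zeta -> size zeta = k ->
  is_child S zeta phi ->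
  (forall v, is_child S zeta v -> v = phi) ->
  (unique_wl S zeta -> w S phi = 1%N) /\
  (~ unique_wl S zeta -> w S phi = w S zeta).
Proof.
case=> HS2 _ _ _ /andP[k1 kn] Hz Hsz /and4P[_ Hphi /eqP Hsp Hzp] Honly.
have S0 : (0 < size S)%N by apply: leq_trans HS2.
rewrite Hsz in Hsp.
have [a Ea] : exists a, phi = rcons zeta a.
  move/prefixP: Hzp => [s Es]; move: Hsp; rewrite Es size_cat Hsz.
  case: s Es => [|x [|y t]] Es /= E.
  - lia.
  - by exists x; rewrite cats1.
  - lia.
have childP v : is_node S v -> size v = k.+1 -> prefix zeta v -> v = phi.
  by move=> Hv Hs Hp; apply: Honly; rewrite /is_child Hz Hv Hs Hsz eqxx Hp.
split.
- move=> U; rewrite /w; case: excluded_middle_informative => // H; exfalso; apply: H.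
  have wlz c v : weiner_link S phi v c ->
      weiner_link S zeta (c :: zeta) c /\
      v = c :: (if size phi == size S then zeta else phi).
    move=> W; have := wl_form W; rewrite -/(size phi).
    have Et : size phi == size S -> take (size S).-1 phi = zeta.
      by move=> /eqP <-; rewrite Ea size_rcons /= take_rcons_size.
    case: ifP => Hn Ev.
      rewrite Et // in Ev; split => //.
      have Hv : is_node S v by case/andP: W => /andP[].
      by rewrite /weiner_link Hz -Ev Hv eqxx.
    split => //; rewrite /weiner_link Hz eqxx /= andbT.
    apply: (node_prefix (v := v)); first by case/andP: W => /andP[].
    by rewrite Ev /= eqxx Hzp.
  split.
    move=> v1 c1 v2 c2 W1 W2.
    case: (wlz _ _ W1) => Z1 ->; case: (wlz _ _ W2) => Z2 ->.
    by case: (U _ _ _ _ Z1 Z2) => ->.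
  case: (ltnP k.+1 (size S)) => Hk.
  + have [c Hc] : exists c, is_node S (c :: phi) by apply: node_prepend => //; rewrite Hsp.
    exists (c :: phi), c; split.
      by rewrite /weiner_link Hphi Hc eqxx.
    case=> v' [Hv' Hne Hpos Hs' Ht'].
    move: Hv' Hne Hs' Ht'; case/lastP: v' => [|p b] Hv' Hne Hs' Ht'.
      by rewrite -Hs' in Hpos.
    have Hs2 : size p = size phi by move: Hs'; rewrite size_rcons /= => -[].
    rewrite /= -Hs2 take_rcons_size Hs2 Hsp Ea /= -Hsz take_rcons_size in Ht'.
    rewrite Ht' rcons_cons in Hv' Hne.
    have := childP _ (node_behead S0 Hv'); rewrite size_rcons Hsz prefix_rcons.
    by move=> /(_ erefl erefl) E; rewrite E eqxx in Hne.
  + have Hk' : k.+1 = size S by lia.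
    have [c Hc] : exists c, is_node S (c :: zeta) by apply: node_prepend => //; rewrite Hsz.
    exists (c :: zeta), c; split.
      by rewrite /weiner_link Hphi Hc Hsp Hk' eqxx /= -Hk' /= Ea -Hsz take_rcons_size eqxx orbT.
    case=> v' [Hv' Hne Hpos Hs' Ht'].
    have Rv : (c :: zeta) \in rotations S by apply: node_full => //=; rewrite Hsz.
    have Rv' : v' \in rotations S by apply: node_full => //; rewrite Hs' /= Hsz.
    have Hp : perm_eq v' (c :: zeta).
      by apply: perm_trans (inR_perm Rv') _; rewrite perm_sym inR_perm.
    move: Hv' Hne Hs' Ht' Hp Rv' Hpos; case/lastP: v' => [|p b] Hv' Hne Hs' Ht' Hp Rv' Hpos.
      by rewrite -Hs' in Hpos.
    have Eq0 : c :: zeta = rcons (belast c zeta) (last c zeta) by rewrite lastI.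
    move: (belast c zeta) (last c zeta) Eq0 => q e Eq.
    have Hq : size q = size zeta by move: (congr1 size Eq); rewrite size_rcons /= => -[].
    have Hs2 : size p = size zeta by move: Hs'; rewrite size_rcons /= => -[].
    rewrite /= -Hs2 take_rcons_size in Ht'; rewrite Eq Hs2 -Hq take_rcons_size in Ht'.
    rewrite Eq Ht' in Hne Hp.
    move: Hp; rewrite -!cats1 perm_cat2l => /perm_small_eq -/(_ erefl) [E].
    by rewrite E eqxx in Hne.
- move=> nU.
  have wz : w S zeta = nleaves S zeta.
    by rewrite /w; case: excluded_middle_informative => H //; exfalso; exact: nU (proj1 H).
  rewrite wz /w; case: excluded_middle_informative => H; first have U := proj1 H.
    exfalso; apply: nU => v1 c1 v2 c2 W1 W2.
    have E1 := wl_form W1; have E2 := wl_form W2.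
    rewrite Hsz (ltn_eqF kn) in E1 E2; rewrite E1 E2; congr (_ :: _).
    have N1 : is_node S (c1 :: zeta) by rewrite -E1; case/andP: W1 => /andP[].
    have N2 : is_node S (c2 :: zeta) by rewrite -E2; case/andP: W2 => /andP[].
    case: (ltnP k.+1 (size S)) => Hk.
    + have key c : is_node S (c :: zeta) -> is_node S (c :: phi).
        move=> Nc; have [x Hx] : exists x, is_node S (rcons (c :: zeta) x) by apply: node_ext => //; rewrite /= Hsz.
        have := childP _ (node_behead S0 (c := c) Hx); rewrite size_rcons Hsz prefix_rcons.
        by move=> /(_ erefl erefl) <-.
      have W1' : weiner_link S phi (c1 :: phi) c1 by rewrite /weiner_link Hphi key // eqxx.
      have W2' : weiner_link S phi (c2 :: phi) c2 by rewrite /weiner_link Hphi key // eqxx.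
      by case: (U _ _ _ _ W1' W2').
    + have key c : is_node S (c :: zeta) -> c = a.
        move=> Nc; have Rc : (c :: zeta) \in rotations S.
          apply: node_full => //=; rewrite Hsz; apply/eqP; rewrite eqn_leq Hk.
          by rewrite -Hsz -/(size (c :: zeta)) node_size.
        have Rr := inR_rot1 S0 Rc; rewrite rot1_cons in Rr.
        have Nr : is_node S (rcons zeta c) by apply/nodeP; exists (rcons zeta c); [exact: Rr|exact: prefix_refl].
        have := childP _ Nr; rewrite size_rcons Hsz prefix_rcons Ea.
        by move=> /(_ erefl erefl); apply: rcons_injr.
      by rewrite (key _ N1) (key _ N2).
  apply: eq_in_count => r; rewrite mem_undup => Hr.
  apply/idP/idP => Hp; first by apply: prefix_trans Hzp Hp.
  have Nt : is_node S (take k.+1 r) by apply/nodeP; exists r => //; apply: prefix_take.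
  have Ht : take k.+1 r = phi.
    apply: childP => //; first by rewrite size_takel // (inR_size Hr).
    by rewrite prefixE take_takel // Hsz; move: Hp; rewrite prefixE Hsz.
  by rewrite -Ht prefix_take.
Qed.
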